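(* Let $n \ge 1$, let $x, y$ be binary words of the same length, and let $a, b, a', b' \in \{0,1\}$ with $a = 0$ or $a' = 0$. If $D(x,y) \ge n$ and $D(xa', yb') \ge n$, then $D(xa'a, yb'b) \ge n$.
   Context: For a binary word $x = x_1\cdots x_\ell$, $[x] = \sum_{j=1}^{\ell} x_j F_{\ell-j+2}$ where $F_0=0,F_1=1,F_k=F_{k-1}+F_{k-2}$. For words $u,v$, $D(u,v) = [v] - n[u]$. *)

(* Defs.v *)
From mathcomp Require Import all_boot all_order all_algebra.
Set Implicit Arguments. Unset Strict Implicit. Unset Printing Implicit Defensive.
Import GRing.Theory Num.Theory.

Fixpoint fib (k : nat) : nat :=
  match k with
  | 0 => 0
  | 1 => 1
  | (m.+1 as k') .+1 => fib k' + fib m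
  end.

(* [x] = sum_{j=1}^{l} x_j F_{l-j+2}; with 0-based index j this is
   sum_{j<l} x_j F_{l-j+1}. Binary words are seq bool (true = 1). *)
Definition word_val (x : seq bool) : nat :=
  \sum_(j < size x) (nth false x j) * fib (size x - j + 1).

Definition D (n : nat) (u v : seq bool) : int :=
  (word_val v)%:Z - (n%:Z * (word_val u)%:Z)%R.

(* Main.v *)
Require Import Defs.
From mathcomp Require Import all_boot all_order all_algebra.
From mathcomp Require Import zify.
Import GRing.Theory Num.Theory.
Local Open Scope ring_scope.

Definition G (k : nat) (x : seq bool) : nat :=
  (\sum_(j < size x) (nth false x j) * fib (size x - j + k))%N.

Lemma G_rcons k x c : G k (rcons x c) = (G k.+1 x + c * fib k.+1)%N.
Proof.
rewrite /G size_rcons big_ord_recr /= nth_rcons ltnn eqxx subSnn.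
congr (_ + _)%N; apply eq_bigr => i _.
by rewrite nth_rcons ltn_ord subSn ?(ltnW (ltn_ord i)) // addSn addnS.
Qed.

Lemma G3 x : G 3 x = (G 2 x + G 1 x)%N.
Proof.
rewrite /G -big_split /=; apply eq_bigr => i _.
by rewrite -mulnDr !addnS addn0.
Qed.

Lemma wv2 x c d : word_val (rcons (rcons x c) d) =
  (word_val (rcons x c) + word_val x + c + d)%N.
Proof.
rewrite /word_val -!/(G 1 _) !G_rcons G3 /=.
rewrite -/(G 2 _) -/(G 1 _) /=.
move: (G 2 x) (G 1 x) => u v.
rewrite !addn0 !muln1 mulnDr muln1; lia.
Qed.

Theorem lemma10 (n : nat) (x y : seq bool) (a b a' b' : bool) :
  (1 <= n)%N -> size x = size y -> (a = false \/ a' = false) ->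
  n%:Z <= D n x y ->
  n%:Z <= D n (rcons x a') (rcons y b') ->
  n%:Z <= D n (rcons (rcons x a') a) (rcons (rcons y b') b).
Proof.
move=> _ _ Ha; rewrite /D !wv2.
move: (word_val x) (word_val y) (word_val (rcons x a')) (word_val (rcons y b')) => p q r s.
rewrite !PoszD !mulrDr.
move: (n%:Z * p%:Z) (n%:Z * r%:Z) => P R.
case: Ha => ->; case: a'; case: b; case: b'; case: a => /=; rewrite ?mulr1 ?mulr0; lia.
Qed.
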